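(* Let $\mathcal O$ be a cyclic operad, $n\ge1$, and let $S_0\in\mathcal S[2]$ be the $\mathcal O$-spider represented by the unit $1_{\mathcal O}\in\mathcal O[1]$. The subspace $\mathfrak a\mathcal O_n^0$ of $\mathfrak a\mathcal O_n$ spanned by the symplecto-spiders $[S_0\otimes v\otimes w]$, $v,w\in V_n$, is a Lie subalgebra of $\mathfrak a\mathcal O_n$ isomorphic to the symplectic Lie algebra $\mathfrak{sp}(2n)$.
   Context: Work over $\mathbb R$. A cyclic operad $\mathcal O$ consists of real vector spaces $\mathcal O[m]$ ($m\ge1$), a unit $1_{\mathcal O}\in\mathcal O[1]$, composition maps $\gamma:\mathcal O[m]\otimes\mathcal O[i_1]\otimes\cdots\otimes\mathcal O[i_m]\to\mathcal O[i_1+\cdots+i_m]$, and actions of $\Sigma_{m+1}$ on $\mathcal O[m]$ (permuting the output slot $0$ and the input slots $1,\dots,m$), satisfying the usual cyclic operad axioms (Getzler–Kapranov). For $m\ge2$ let $*_m$ be the star with one internal vertex and $m$ legs; a labeling is a bijection $L$ from the legs to $\{0,\dots,m-1\}$. The space of $\mathcal O$-spiders with $m$ legs is the coinvariant space $\mathcal S[m]=(\bigoplus_L\mathcal O[m-1])_{\Sigma_m}$, with $\sigma\cdot(o)_L=(\sigma\cdot o)_{\sigma\cdot L}$; each element is a class $[o_L]$. Given spiders $S,T$ and legs $\lambda$ of $S$, $\mu$ of $T$, the mating $(S,\lambda)\circ(\mu,T)$ is obtained by choosing representatives $(o_1)_{L_1}$ of $S$, $(o_2)_{L_2}$ of $T$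 with $L_1(\lambda)=0$, $L_2(\mu)=1$, and taking the class of $\gamma(o_2\otimes o_1\otimes 1_{\mathcal O}\otimes\cdots\otimes 1_{\mathcal O})$ with legs the remaining legs of $S$ and $T$ (the legs of $S$ inserted in order at the position of $\mu$). Let $V_n=\mathbb R^{2n}$ with basis $p_1,\dots,p_n,q_1,\dots,q_n$ and standard symplectic form $\omega$ ($\omega(p_i,q_j)=\delta_{ij}=-\omega(q_j,p_i)$, $\omega(p_i,p_j)=\omega(q_i,q_j)=0$). Define $\mathfrak a\mathcal O_n=\bigoplus_{m\ge2}(\mathcal S[m]\otimes V_n^{\otimes m})_{\Sigma_m}$ ($\Sigma_m$ acting diagonally); elements $[S\otimes v_1\otimes\cdots\otimes v_m]$ are symplecto-spiders (vector $v_i$ on the $i$-th leg). The bracket of symplecto-spiders $\mathbf s_1,\mathbf s_2$ is $[\mathbf s_1,\mathbf s_2]=\sum_{\lambda\in\mathbf s_1,\mu\in\mathbf s_2}\omega(v_\lambda,w_\mu)\,\cdot$(the symplecto-spider obtained by mating the underlying spiders along $\lambda,\mu$, deleting $v_\lambda,w_\mu$ and keeping the vectors on the remaining legs), extended bilinearly; this is a Lie bracket. *)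

(* Defs.v *)
From HB Require Import structures.
From mathcomp Require Import all_boot all_order fingroup perm all_algebra.
From mathcomp Require Import reals.

Set Implicit Arguments.
Unset Strict Implicit.
Unset Printing Implicit Defensive.

Import Order.TTheory GRing.Theory Num.Theory.
Local Open Scope ring_scope.

(* Indexing convention: [op k] is the space O[k+1]; its elements have slots *)
(* 0 (output), 1, ..., k+1 (inputs).  [opact k s] is the action of          *)
(* Sigma_{k+2} on O[k+1]; an element s.x has at slot s(j) what x had at     *)
(* slot j.  [opcomp i x y] (i : 'I_k.+1) is the partial composition         *)
(* x o_{i+1} y : slot i+1 of x glued to the output slot 0 of y.             *)

Record opData (R : nzRingType) := OpData {
  op : nat -> lmodType R;
  op1 : op 0;
  opact : forall k, {perm 'I_k.+2} -> op k -> op k;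
  opcomp : forall k l, 'I_k.+1 -> op k -> op l -> op (k + l)
}.

Arguments op1 {R} _.
Arguments opact {R} _ {k}.
Arguments opcomp {R} _ {k l}.

Definition castO (R : nzRingType) (O : opData R) (m p : nat) (e : m = p)
  (x : op O m) : op O p :=
  match e in _ = q return op O q with erefl => x end.

(* Origin of slot r of x o_{i+1} y, where y has arity l+1:                  *)
(* (false, s) = slot s of x ; (true, s) = slot s of y.                      *)
Definition orig (l i r : nat) : bool * nat :=
  if (r <= i)%N then (false, r)
  else if (r <= i + l.+1)%N then (true, (r - i)%N) else (false, (r - l)%N).

(* relabelling of origins under (s acting on x, t acting on y) *)
Definition relab k l (s : {perm 'I_k.+2}) (t : {perm 'I_l.+2})
  (p : bool * nat) : bool * nat :=
  if p.1 then (true, val (t (inord p.2))) else (false, val (s (inord p.2))).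

(* same, when the roles of the two arguments are swapped in the composite *)
Definition relabsw k l (s : {perm 'I_k.+2}) (t : {perm 'I_l.+2})
  (p : bool * nat) : bool * nat :=
  if p.1 then (false, val (t (inord p.2))) else (true, val (s (inord p.2))).

Definition slot k (i : 'I_k.+1) : 'I_k.+2 := lift ord0 i.

Record is_cyclic_operad (R : nzRingType) (O : opData R) : Prop := {
  cyc_act_lin : forall k (s : {perm 'I_k.+2}) (a : R) (x y : op O k),
    opact O s (a *: x + y) = a *: opact O s x + opact O s y;
  cyc_comp_linl : forall k l (i : 'I_k.+1) (a : R) (x x' : op O k) (y : op O l),
    opcomp O i (a *: x + x') y = a *: opcomp O i x y + opcomp O i x' y;
  cyc_comp_linr : forall k l (i : 'I_k.+1) (a : R) (x : op O k) (y y' : op O l),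
    opcomp O i x (a *: y + y') = a *: opcomp O i x y + opcomp O i x y';
  cyc_act1 : forall k (x : op O k), opact O (1%g : {perm 'I_k.+2}) x = x;
  cyc_actM : forall k (s t : {perm 'I_k.+2}) (x : op O k),
    opact O s (opact O t x) = opact O (t * s)%g x;
  cyc_unitl : forall k (x : op O k), opcomp O (ord0 : 'I_1) (op1 O) x = x;
  cyc_unitr : forall k (i : 'I_k.+1) (x : op O k),
    castO (addn0 k) (opcomp O i x (op1 O)) = x;
  cyc_unit_inv : forall s : {perm 'I_2}, opact O s (op1 O) = op1 O;
  cyc_assoc_seq : forall k l p (i : 'I_k.+1) (j : 'I_(k + l).+1) (j' : 'I_l.+1)
      (x : op O k) (y : op O l) (z : op O p),
    (i <= j)%N -> val j' = (j - i)%N ->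
    opcomp O j (opcomp O i x y) z
    = castO (addnA k l p) (opcomp O i x (opcomp O j' y z));
  cyc_assoc_par : forall k l p (i : 'I_k.+1) (j : 'I_(k + l).+1) (j2 : 'I_k.+1)
      (i2 : 'I_(k + p).+1) (x : op O k) (y : op O l) (z : op O p),
    (j < i)%N -> val j2 = val j -> val i2 = (i + p)%N ->
    opcomp O j (opcomp O i x y) z
    = castO (addnAC k p l) (opcomp O i2 (opcomp O j2 x z) y);
  (* cyclic equivariance: composition is natural w.r.t. relabelling of
     slots (this contains the Sigma-equivariance of an operad and the
     cyclic axioms t(x o_i y) = t x o_{i-1} y, t(x o_1 y) = t y o_n t x) *)
  cyc_equiv : forall k l (i i' : 'I_k.+1) (s : {perm 'I_k.+2})
      (t : {perm 'I_l.+2}) (pi : {perm 'I_(k + l).+2})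
      (x : op O k) (y : op O l),
    t ord0 = ord0 -> s (slot i) = slot i' ->
    (forall r : 'I_(k + l).+2, orig l i' (pi r) = relab s t (orig l i r)) ->
    opcomp O i' (opact O s x) (opact O t y) = opact O pi (opcomp O i x y);
  cyc_equiv_swap : forall k l (i : 'I_k.+1) (i' : 'I_l.+1)
      (s : {perm 'I_k.+2}) (t : {perm 'I_l.+2}) (pi : {perm 'I_(k + l).+2})
      (x : op O k) (y : op O l),
    s (slot i) = ord0 -> t ord0 = slot i' ->
    (forall r : 'I_(k + l).+2, orig k i' (pi r) = relabsw s t (orig l i r)) ->
    castO (addnC l k) (opcomp O i' (opact O t y) (opact O s x))
    = opact O pi (opcomp O i x y)
}.

(* The symplectic space V_n = R^{2n}: coordinates lshift n i are p_i,       *)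
(* rshift n i are q_i.                                                      *)

Definition Vn (R : nzRingType) (n : nat) := 'rV[R]_(n + n).

Definition omega (R : nzRingType) (n : nat) (x y : Vn R n) : R :=
  \sum_(i < n) (x ord0 (lshift n i) * y ord0 (rshift n i)
                - x ord0 (rshift n i) * y ord0 (lshift n i)).

(* Generators: a symplecto-spider with k+2 legs, given by a representative  *)
(* (o)_L of the underlying spider (L : legs -> labels {0..k+1}, o in O[k+1])*)
(* and the vectors sv j on the legs j.                                      *)

Record sspider (R : nzRingType) (n : nat) (O : opData R) := SSp {
  sk : nat;
  sL : {perm 'I_sk.+2};
  so : op O sk;
  sv : {ffun 'I_sk.+2 -> Vn R n}
}.

Arguments SSp {R n O} sk sL so sv.

Definition fcomb (R : nzRingType) (n : nat) (O : opData R) :=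
  seq (R * sspider n O).

Definition updv (R : nzRingType) (n k : nat) (v : {ffun 'I_k.+2 -> Vn R n})
  (j : 'I_k.+2) (x : Vn R n) : {ffun 'I_k.+2 -> Vn R n} :=
  [ffun i => if i == j then x else v i].

(* Maps out of generators that respect all defining relations of            *)
(* aO_n = (+)_m (S[m] (x) V^{(x)m})_{Sigma_m}, S[m] = ((+)_L O[m-1])_{Sigma_m}:*)
(* linearity in o, multilinearity in the leg vectors, the label action      *)
(* (o)_L ~ (s.o)_{s.L}, and the diagonal action of Sigma_m on the legs.     *)
Definition admissible (R : nzRingType) (n : nat) (O : opData R)
  (W : lmodType R) (Phi : sspider n O -> W) : Prop :=
  [/\ (forall k (L : {perm 'I_k.+2}) (v : {ffun 'I_k.+2 -> Vn R n}) (a : R)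
              (o o' : op O k),
         Phi (SSp k L (a *: o + o') v)
         = a *: Phi (SSp k L o v) + Phi (SSp k L o' v)),
      (forall k (L : {perm 'I_k.+2}) (o : op O k)
              (v : {ffun 'I_k.+2 -> Vn R n}) (j : 'I_k.+2) (a : R)
              (x y : Vn R n),
         Phi (SSp k L o (updv v j (a *: x + y)))
         = a *: Phi (SSp k L o (updv v j x)) + Phi (SSp k L o (updv v j y))),
      (forall k (L s : {perm 'I_k.+2}) (o : op O k)
              (v : {ffun 'I_k.+2 -> Vn R n}),
         Phi (SSp k (L * s)%g (opact O s o) v) = Phi (SSp k L o v)) &
      (forall k (L t : {perm 'I_k.+2}) (o : op O k)
              (v : {ffun 'I_k.+2 -> Vn R n}),
         Phi (SSp k (t^-1 * L)%g o [ffun j => v ((t^-1)%g j)])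
         = Phi (SSp k L o v))].

Definition evc (R : nzRingType) (n : nat) (O : opData R) (W : lmodType R)
  (Phi : sspider n O -> W) (x : fcomb n O) : W :=
  \sum_(p <- x) p.1 *: Phi p.2.

(* x and y represent the same element of aO_n *)
Definition aequiv (R : nzRingType) (n : nat) (O : opData R)
  (x y : fcomb n O) : Prop :=
  forall (W : lmodType R) (Phi : sspider n O -> W),
    admissible Phi -> evc Phi x = evc Phi y.

(* (S,lam) o (mu,T): choose representatives with L1(lam) = 0, L2(mu) = 1    *)
(* (via the label action by transpositions), compose o2 o_1 o1 (this is     *)
(* gamma(o2; o1, 1, ..., 1)), and place on each slot of the result the      *)
(* vector of the leg attached to it.  The result is written with the        *)
(* identity labeling, i.e. legs ordered by the slots; this differs from the *)
(* paper's leg ordering only by a leg permutation (a defining relation).    *)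

Definition mate (R : nzRingType) (n : nat) (O : opData R)
  (S T : sspider n O) (lam : 'I_(sk S).+2) (mu : 'I_(sk T).+2)
  : sspider n O :=
  let k1 := sk S in
  let k2 := sk T in
  let s1 := tperm (sL S lam) ord0 in
  let L1 := (sL S * s1)%g in
  let o1 := opact O s1 (so S) in
  let s2 := tperm (sL T mu) (inord 1) in
  let L2 := (sL T * s2)%g in
  let o2 := opact O s2 (so T) in
  SSp (k2 + k1) 1%g (opcomp O (ord0 : 'I_k2.+1) o2 o1)
    [ffun j : 'I_(k2 + k1).+2 =>
       if val j == 0 then sv T ((L2^-1)%g ord0)
       else if (val j <= k1.+1)%N then sv S ((L1^-1)%g (inord j))
       else sv T ((L2^-1)%g (inord (j - k1)%N))].

Definition brg (R : nzRingType) (n : nat) (O : opData R)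
  (S T : sspider n O) : fcomb n O :=
  flatten [seq [seq (omega (sv S lam) (sv T mu), mate lam mu)
               | mu <- enum 'I_(sk T).+2] | lam <- enum 'I_(sk S).+2].

Definition abr (R : nzRingType) (n : nat) (O : opData R)
  (x y : fcomb n O) : fcomb n O :=
  flatten [seq [seq (p.1 * q.1 * r.1, r.2) | r <- brg p.2 q.2]
          | p <- x, q <- y].

Definition S0g (R : nzRingType) (n : nat) (O : opData R) (v w : Vn R n)
  : sspider n O :=
  SSp 0 1%g (op1 O) [ffun j : 'I_2 => if j == ord0 then v else w].

Definition S0comb (R : nzRingType) (n : nat) (O : opData R)
  (c : seq (R * Vn R n * Vn R n)) : fcomb n O :=
  [seq (p.1.1, S0g O p.1.2 p.2) | p <- c].

Definition scomb (R : nzRingType) (n : nat) (a : R)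
  (c : seq (R * Vn R n * Vn R n)) : seq (R * Vn R n * Vn R n) :=
  [seq (a * p.1.1, p.1.2, p.2) | p <- c].

Definition Jmx (R : nzRingType) (n : nat) : 'M[R]_(n + n) :=
  block_mx 0 1%:M (- 1%:M) 0.

Definition in_sp (R : nzRingType) (n : nat) (X : 'M[R]_(n + n)) : bool :=
  X^T *m Jmx R n + Jmx R n *m X == 0.

Definition lie (R : nzRingType) (n : nat) (X Y : 'M[R]_(n + n)) :
  'M[R]_(n + n) := X *m Y - Y *m X.

(* Main.v *)
Require Import Defs.
From HB Require Import structures.
From mathcomp Require Import all_boot all_order fingroup perm all_algebra.
From mathcomp Require Import reals.
From mathcomp Require Import ring.
Import Order.TTheory GRing.Theory Num.Theory.
Local Open Scope ring_scope.
Set Implicit Arguments.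
Unset Strict Implicit.

Definition symm (R : nzRingType) (n : nat) (v w : Vn R n) : 'M[R]_(n + n) :=
  v^T *m w + w^T *m v.

Lemma omegaE (R : comNzRingType) (n : nat) (b c : Vn R n) :
  b *m Jmx R n *m c^T = (omega b c)%:M.
Proof.
rewrite /Jmx -[b]hsubmxK -[c]hsubmxK mul_row_block !mulmx0 !mulmx1 add0r addr0.
rewrite mulmxN mulmx1 tr_row_mx mul_row_col.
apply/matrixP => i j; rewrite !ord1 !mxE eqxx mulr1n /omega.
rewrite -big_split /=; apply: eq_bigr => k _.
rewrite !row_mxEl !row_mxEr !mxE. ring.
Qed.

Lemma omegaN (R : comNzRingType) (n : nat) (b c : Vn R n) :
  omega b c = - omega c b.
Proof. rewrite /omega -sumrN; apply: eq_bigr => i _; ring. Qed.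

Lemma outerJ (R : comNzRingType) (n : nat) (a b c d : Vn R n) :
  a^T *m b *m Jmx R n *m (c^T *m d) = omega b c *: (a^T *m d).
Proof.
by rewrite !mulmxA -(mulmxA a^T) -(mulmxA a^T) omegaE mul_mx_scalar scalemxAl.
Qed.

Lemma JJ (R : comNzRingType) (n : nat) : Jmx R n *m Jmx R n = - 1%:M.
Proof.
rewrite /Jmx mulmx_block !mulmx0 !mul0mx !addr0 !add0r mulmxN !mulmx1.
by rewrite (scalar_mx_block n n) opp_block_mx !oppr0.
Qed.

Lemma trJ (R : comNzRingType) (n : nat) : (Jmx R n)^T = - Jmx R n.
Proof.
by rewrite /Jmx tr_block_mx !trmx0 trmx1 linearN /= trmx1 opp_block_mx !oppr0 opprK.
Qed.

Definition gen (R : comNzRingType) (n : nat) (v w : Vn R n) := symm v w *m Jmx R n.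

Lemma gen_lie (R : comNzRingType) (n : nat) (v1 w1 v2 w2 : Vn R n) :
  lie (gen v1 w1) (gen v2 w2) =
  omega v1 v2 *: gen w2 w1 + omega v1 w2 *: gen v2 w1
  + omega w1 v2 *: gen w2 v1 + omega w1 w2 *: gen v2 v1.
Proof.
rewrite /lie /gen !mulmxA -mulmxBl !scalemxAl -!mulmxDl; congr (_ *m _).
rewrite /symm !mulmxDl !mulmxDr !outerJ.
rewrite (omegaN w2 v1) (omegaN w2 w1) (omegaN v2 v1) (omegaN v2 w1).
apply/matrixP => i j; rewrite !mxE; ring.
Qed.

Definition Mc (R : comNzRingType) (n : nat) (c : seq (R * Vn R n * Vn R n)) :
  'M[R]_(n + n) := \sum_(p <- c) p.1.1 *: symm p.1.2 p.2.
Definition psi (R : comNzRingType) (n : nat) (c : seq (R * Vn R n * Vn R n)) :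
  'M[R]_(n + n) := Mc c *m Jmx R n.

Lemma symm_tr (R : comNzRingType) (n : nat) (v w : Vn R n) :
  (symm v w)^T = symm v w.
Proof. by rewrite /symm linearD /= !trmx_mul !trmxK addrC. Qed.

Lemma Mc_tr (R : comNzRingType) (n : nat) (c : seq (R * Vn R n * Vn R n)) :
  (Mc c)^T = Mc c.
Proof.
rewrite /Mc; elim: c => [|p c IH]; first by rewrite !big_nil trmx0.
by rewrite !big_cons linearD linearZ /= IH symm_tr.
Qed.

Lemma psi_sp (R : comNzRingType) (n : nat) (c : seq (R * Vn R n * Vn R n)) :
  in_sp (psi c).
Proof.
by rewrite /in_sp /psi trmx_mul Mc_tr trJ !mulNmx mulmxA addNr.
Qed.

Lemma psi_cat (R : comNzRingType) (n : nat) (c c' : seq (R * Vn R n * Vn R n)) :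
  psi (c ++ c') = psi c + psi c'.
Proof. by rewrite /psi /Mc big_cat mulmxDl. Qed.

Lemma psi_scale (R : comNzRingType) (n : nat) a (c : seq (R * Vn R n * Vn R n)) :
  psi (scomb a c) = a *: psi c.
Proof.
rewrite /psi /Mc /scomb big_map scalemxAl scaler_sumr; congr (_ *m _).
by apply: eq_bigr => p _ /=; rewrite scalerA.
Qed.

Lemma psi_onto (R : numFieldType) (n : nat) (X : 'M[R]_(n + n)) :
  in_sp X -> exists c, psi c = X.
Proof.
move/eqP=> HX.
set J := Jmx R n.
have e1 : X^T *m J = - (J *m X) by apply/eqP; rewrite -subr_eq0 opprK HX.
have JJ' : J *m (- J) = 1%:M by rewrite mulmxN JJ opprK.
have e2 : J *m X^T = - (X *m J).
  rewrite -[J *m X^T]mulmx1 -JJ' !mulmxA -(mulmxA J) e1.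
  rewrite [J *m - _]mulmxN mulmxA JJ [- 1%:M *m _]mulNmx mul1mx opprK.
  by rewrite mulmxN.
set S := - (X *m J).
have HS : S^T = S by rewrite /S linearN /= trmx_mul trJ mulNmx e2 opprK.
have Ssym i j : S i j = S j i by rewrite -{1}HS mxE.
pose c := [seq (S i j / 2, delta_mx 0 i, delta_mx 0 j) : R * Vn R n * Vn R n
          | i <- index_enum 'I_(n + n), j <- index_enum 'I_(n + n)].
exists c; rewrite /psi.
have -> : Mc c = S.
  rewrite /Mc big_allpairs_dep /=.
  have sE i j : (2^-1 *: S) i j = S i j / 2 by rewrite mxE mulrC.
  have E1 : \sum_i \sum_j (S i j / 2) *: delta_mx i j = 2^-1 *: S.
    rewrite [RHS]matrix_sum_delta; apply: eq_bigr => i _; apply: eq_bigr => j _.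
    by rewrite sE.
  have E2 : \sum_i \sum_j (S i j / 2) *: delta_mx j i = 2^-1 *: S.
    rewrite exchange_big /= [RHS]matrix_sum_delta; apply: eq_bigr => i _.
    by apply: eq_bigr => j _; rewrite sE Ssym.
  transitivity (2^-1 *: S + 2^-1 *: S); last first.
    by rewrite -scalerDl -div1r -splitr scale1r.
  rewrite -{1}E1 -E2 -big_split /=.
  apply: eq_bigr => i _; rewrite -big_split /=; apply: eq_bigr => j _.
  by rewrite /symm !trmx_delta !mul_delta_mx scalerDr.
by rewrite /S mulNmx -mulmxA JJ mulmxN mulmx1 opprK.
Qed.

Lemma I2 (i : 'I_2) : i = ord0 \/ i = ord_max.
Proof.
case: i => [[|[|m]] Hm]; [left | right | by []]; exact: val_inj.
Qed.

Lemma m0 : ((ord_max : 'I_2) == ord0) = false. Proof. by []. Qed.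

Definition swp : {perm 'I_2} := tperm ord0 ord_max.

Lemma P2 (s : {perm 'I_2}) : s = 1%g \/ s = swp.
Proof.
have nz : (ord_max : 'I_2) <> ord0 by [].
case: (I2 (s ord0)) => h; [left | right]; apply/permP => i; rewrite ?perm1 /swp.
- case: (I2 i) => -> //; case: (I2 (s ord_max)) => // h'.
  by exfalso; apply: nz; apply: (@perm_inj _ s); rewrite h h'.
- case: (I2 i) => ->; rewrite ?tpermL ?tpermR //.
  case: (I2 (s ord_max)) => // h'.
  by exfalso; apply: nz; apply: (@perm_inj _ s); rewrite h h'.
Qed.

Lemma sum2 (W : nmodType) (F : 'I_2 -> W) :
  \sum_(i <- enum 'I_2) F i = F ord0 + F ord_max.
Proof.
rewrite enum_ordSl /= enum_ordSl enum_ord0 /= !big_cons big_nil addr0.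
by congr (_ + F _); apply: val_inj.
Qed.

Definition PhiF (R : comNzRingType) (n : nat) (O : opData R) (a b : 'I_(n + n))
  (S : sspider n O) : op O 0 :=
  match S with SSp k L o v =>
    (match k return op O k -> {ffun 'I_k.+2 -> Vn R n} -> op O 0 with
     | 0 => fun o v => (symm (v ord0) (v ord_max)) a b *: (o + opact O swp o)
     | _.+1 => fun _ _ => 0 end) o v end.

Lemma symmDl (R : comNzRingType) (n : nat) (a : R) (x y w : Vn R n) :
  symm (a *: x + y) w = a *: symm x w + symm y w.
Proof.
rewrite /symm linearD linearZ /= mulmxDl mulmxDr -scalemxAl -scalemxAr.
by rewrite scalerDr addrACA.
Qed.

Lemma symmC (R : comNzRingType) (n : nat) (x y : Vn R n) : symm x y = symm y x.
Proof. by rewrite /symm addrC. Qed.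

Lemma symmDr (R : comNzRingType) (n : nat) (a : R) (x y w : Vn R n) :
  symm w (a *: x + y) = a *: symm w x + symm w y.
Proof. by rewrite !(symmC w) symmDl. Qed.

Lemma PhiF_adm (R : comNzRingType) (n : nat) (O : opData R) a b :
  is_cyclic_operad O -> admissible (@PhiF R n O a b).
Proof.
move=> HO; split.
- move=> [|k] L v c o o' /=; last by rewrite scaler0 addr0.
  by rewrite (cyc_act_lin HO) addrACA -scalerDr [LHS]scalerDr !scalerA mulrC.
- move=> [|k] L o v j c x y /=; last by rewrite scaler0 addr0.
  case: (I2 j) => ->; rewrite !ffunE /=.
  + by rewrite symmDl !mxE scalerDl scalerA.
  + by rewrite symmDr !mxE scalerDl scalerA.
- move=> [|k] L s o v /=; last by [].
  case: (P2 s) => ->; first by rewrite (cyc_act1 HO).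
  by rewrite (cyc_actM HO) /swp tperm2 (cyc_act1 HO) addrC.
- move=> [|k] L t o v /=; last by [].
  rewrite !ffunE; case: (P2 t) => ->; first by rewrite invg1 !perm1.
  by rewrite /swp tpermV tpermL tpermR symmC.
Qed.

Lemma lin_sum (R : comNzRingType) (n : nat) (W : lmodType R) (f : Vn R n -> W) :
  (forall a x y, f (a *: x + y) = a *: f x + f y) ->
  forall u, f u = \sum_i u 0 i *: f 'e_i.
Proof.
move=> Hf u.
have f0 : f 0 = 0.
  have := Hf 1 0 0; rewrite scaler0 addr0 scale1r => /(congr1 (fun z => z - f 0)).
  by rewrite addrK subrr.
rewrite {1}(row_sum_delta u).
apply: (big_ind2 (fun x y => f x = y)) => //.
- by move=> x1 x2 y1 y2 <- <-; have := Hf 1 x1 y1; rewrite !scale1r.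
- by move=> i _; have := Hf (u 0 i) 'e_i 0; rewrite addr0 f0 addr0.
Qed.

Definition Bf (R : comNzRingType) (n : nat) (O : opData R) (W : lmodType R)
  (Phi : sspider n O -> W) (v w : Vn R n) : W := Phi (S0g O v w).

Lemma updv0 (R : comNzRingType) (n : nat) (v w z : Vn R n) :
  updv [ffun j : 'I_2 => if j == ord0 then v else w] ord0 z
  = [ffun j : 'I_2 => if j == ord0 then z else w].
Proof. by apply/ffunP => j; case: (I2 j) => ->; rewrite /updv !ffunE ?eqxx ?m0. Qed.

Lemma updv1 (R : comNzRingType) (n : nat) (v w z : Vn R n) :
  updv [ffun j : 'I_2 => if j == ord0 then v else w] ord_max z
  = [ffun j : 'I_2 => if j == ord0 then v else z].
Proof. by apply/ffunP => j; case: (I2 j) => ->; rewrite /updv !ffunE ?eqxx ?m0. Qed.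

Lemma B_lin1 (R : comNzRingType) (n : nat) (O : opData R) (W : lmodType R)
  (Phi : sspider n O -> W) : admissible Phi ->
  forall w a x y, Bf Phi (a *: x + y) w = a *: Bf Phi x w + Bf Phi y w.
Proof.
case=> _ H2 _ _ w a x y; rewrite /Bf /S0g.
by have := H2 0 1%g (op1 O) [ffun j : 'I_2 => if j == ord0 then 0 else w] ord0 a x y; rewrite !updv0.
Qed.

Lemma B_lin2 (R : comNzRingType) (n : nat) (O : opData R) (W : lmodType R)
  (Phi : sspider n O -> W) : admissible Phi ->
  forall v a x y, Bf Phi v (a *: x + y) = a *: Bf Phi v x + Bf Phi v y.
Proof.
case=> _ H2 _ _ v a x y; rewrite /Bf /S0g.
by have := H2 0 1%g (op1 O) [ffun j : 'I_2 => if j == ord0 then v else 0] ord_max a x y; rewrite !updv1.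
Qed.

Lemma B_sym (R : comNzRingType) (n : nat) (O : opData R) (W : lmodType R)
  (Phi : sspider n O -> W) : is_cyclic_operad O -> admissible Phi ->
  forall v w, Bf Phi v w = Bf Phi w v.
Proof.
move=> HO [_ _ H3 H4] v w; rewrite /Bf /S0g.
rewrite -(H4 0 1%g swp) /swp tpermV mulg1.
rewrite -(H3 0 1%g swp) mul1g (cyc_unit_inv HO).
congr (Phi (SSp 0 _ _ _)).
apply/ffunP => j; rewrite !ffunE; case: (I2 j) => ->; rewrite ?tpermL ?tpermR //.
Qed.

Lemma Bsum (R : comNzRingType) (n : nat) (O : opData R) (W : lmodType R)
  (Phi : sspider n O -> W) : admissible Phi ->
  forall v w, Bf Phi v w + Bf Phi w v
    = \sum_a \sum_b symm v w a b *: Bf Phi 'e_a 'e_b.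
Proof.
move=> Had v w.
have L1 := B_lin1 Had; have L2 := B_lin2 Had.
have E x y : Bf Phi x y = \sum_a \sum_b (x 0 a * y 0 b) *: Bf Phi 'e_a 'e_b.
  rewrite (lin_sum (f := fun x => Bf Phi x y) (L1 y) x); apply: eq_bigr => a _.
  rewrite (lin_sum (L2 'e_a) y) scaler_sumr; apply: eq_bigr => b _.
  by rewrite scalerA.
rewrite (E v w) (E w v) -big_split /=; apply: eq_bigr => a _.
rewrite -big_split /=; apply: eq_bigr => b _.
by rewrite -scalerDl /symm !mxE !big_ord1 !mxE.
Qed.

Lemma evc_S0 (R : comNzRingType) (n : nat) (O : opData R) (W : lmodType R)
  (Phi : sspider n O -> W) c :
  evc Phi (S0comb O c) = \sum_(p <- c) p.1.1 *: Bf Phi p.1.2 p.2.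
Proof. by rewrite /evc /S0comb big_map. Qed.

Lemma evc2 (R : comNzRingType) (n : nat) (O : opData R) (W : lmodType R)
  (Phi : sspider n O -> W) : is_cyclic_operad O -> admissible Phi ->
  forall c, 2%:R *: evc Phi (S0comb O c)
    = \sum_a \sum_b Mc c a b *: Bf Phi 'e_a 'e_b.
Proof.
move=> HO Had c; rewrite evc_S0 scaler_sumr.
transitivity (\sum_(p <- c) p.1.1 *: \sum_a \sum_b symm p.1.2 p.2 a b *: Bf Phi 'e_a 'e_b).
  apply: eq_bigr => p _; rewrite -Bsum // [Bf Phi p.2 _](B_sym HO Had).
  by rewrite scalerA mulrC -scalerA scaler_nat mulr2n.
under eq_bigr do rewrite scaler_sumr.
rewrite exchange_big; apply: eq_bigr => a _.
under eq_bigr do rewrite scaler_sumr.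
rewrite exchange_big; apply: eq_bigr => b _.
rewrite /Mc summxE scaler_suml; apply: eq_bigr => p _.
by rewrite scalerA [(_ *: symm _ _) a b]mxE.
Qed.

Lemma i1 : (inord 1 : 'I_2) = ord_max.
Proof. by apply: val_inj; rewrite /= inordK. Qed.

Lemma mate_S0 (R : comNzRingType) (n : nat) (O : opData R) :
  is_cyclic_operad O -> forall (v1 w1 v2 w2 : Vn R n) (lam mu : 'I_2),
  @mate R n O (S0g O v1 w1) (S0g O v2 w2) lam mu
  = S0g O (if mu == ord0 then w2 else v2) (if lam == ord0 then w1 else v1).
Proof.
move=> HO v1 w1 v2 w2 lam mu.
rewrite /mate /S0g /= !(cyc_unit_inv HO) (cyc_unitl HO).
congr (SSp _ _ _ _).
apply/ffunP => j; rewrite !ffunE !mul1g !perm1 !tpermV.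
case: (I2 j) => -> /=.
  rewrite i1; case: (I2 mu) => ->; first by rewrite tpermL m0 eqxx.
  by rewrite tperm1 perm1 m0 eqxx.
rewrite i1; case: (I2 lam) => ->; first by rewrite tperm1 perm1 m0 eqxx.
by rewrite tpermL eqxx m0.
Qed.

Lemma abr_sum (R : comNzRingType) (n : nat) (O : opData R) (V : nmodType)
  (H : R * sspider n O -> V) c c' :
  \sum_(r <- abr (S0comb O c) (S0comb O c')) H r =
  \sum_(p <- c) \sum_(q <- c') \sum_(lam <- enum 'I_2) \sum_(mu <- enum 'I_2)
    H (p.1.1 * q.1.1 * omega (sv (S0g O p.1.2 p.2) lam) (sv (S0g O q.1.2 q.2) mu),
       @mate R n O (S0g O p.1.2 p.2) (S0g O q.1.2 q.2) lam mu).
Proof.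
rewrite /abr big_flatten /= big_allpairs_dep /S0comb big_map.
apply: eq_bigr => p _; rewrite big_map; apply: eq_bigr => q _.
rewrite big_map /brg big_flatten /= big_map; apply: eq_bigr => lam _.
by rewrite big_map.
Qed.

Lemma lie_suml (R : comNzRingType) (n : nat) I (r : seq I) (F : I -> 'M[R]_(n + n)) Y :
  lie (\sum_(i <- r) F i) Y = \sum_(i <- r) lie (F i) Y.
Proof. by rewrite /lie mulmx_suml mulmx_sumr -sumrB. Qed.

Lemma lie_sumr (R : comNzRingType) (n : nat) I (r : seq I) (F : I -> 'M[R]_(n + n)) X :
  lie X (\sum_(i <- r) F i) = \sum_(i <- r) lie X (F i).
Proof. by rewrite /lie mulmx_suml mulmx_sumr -sumrB. Qed.

Lemma lieZl (R : comNzRingType) (n : nat) (a : R) (X Y : 'M[R]_(n + n)) :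
  lie (a *: X) Y = a *: lie X Y.
Proof. by rewrite /lie -scalemxAl -scalemxAr scalerBr. Qed.

Lemma lieZr (R : comNzRingType) (n : nat) (a : R) (X Y : 'M[R]_(n + n)) :
  lie X (a *: Y) = a *: lie X Y.
Proof. by rewrite /lie -scalemxAl -scalemxAr scalerBr. Qed.

Lemma psiE (R : comNzRingType) (n : nat) (c : seq (R * Vn R n * Vn R n)) :
  psi c = \sum_(p <- c) p.1.1 *: gen p.1.2 p.2.
Proof. by rewrite /psi /Mc mulmx_suml; apply: eq_bigr => p _; rewrite -scalemxAl. Qed.

Definition cbr (R : comNzRingType) (n : nat) (O : opData R)
  (c c' : seq (R * Vn R n * Vn R n)) : seq (R * Vn R n * Vn R n) :=
  [seq (r.1, sv r.2 ord0, sv r.2 ord_max) | r <- abr (S0comb O c) (S0comb O c')].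

Lemma S0_sv0 (R : comNzRingType) (n : nat) (O : opData R) (S : sspider n O) x y :
  S = S0g O x y -> sv S ord0 = x.
Proof. by move=> ->; rewrite /S0g /= ffunE eqxx. Qed.

Lemma S0_sv1 (R : comNzRingType) (n : nat) (O : opData R) (S : sspider n O) x y :
  S = S0g O x y -> sv S ord_max = y.
Proof. by move=> ->; rewrite /S0g /= ffunE m0. Qed.

Lemma S0_eta (R : comNzRingType) (n : nat) (O : opData R) (S : sspider n O) x y :
  S = S0g O x y -> S0g O (sv S ord0) (sv S ord_max) = S.
Proof. by move=> E; rewrite (S0_sv0 E) (S0_sv1 E) E. Qed.

Lemma cbr_aequiv (R : comNzRingType) (n : nat) (O : opData R) :
  is_cyclic_operad O -> forall c c' : seq (R * Vn R n * Vn R n),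
  aequiv (abr (S0comb O c) (S0comb O c')) (S0comb O (cbr O c c')).
Proof.
move=> HO c c' W Phi _.
rewrite /evc /S0comb /cbr -map_comp big_map !abr_sum.
apply: eq_bigr => p _; apply: eq_bigr => q _.
apply: eq_bigr => lam _; apply: eq_bigr => mu _ /=.
by rewrite (S0_eta (mate_S0 HO _ _ _ _ lam mu)).
Qed.

Lemma cbr_psi (R : comNzRingType) (n : nat) (O : opData R) :
  is_cyclic_operad O -> forall c c' : seq (R * Vn R n * Vn R n),
  psi (cbr O c c') = lie (psi c) (psi c').
Proof.
move=> HO c c'.
rewrite psiE /cbr big_map abr_sum !psiE lie_suml.
apply: eq_bigr => p _; rewrite lieZl lie_sumr scaler_sumr.
apply: eq_bigr => q _; rewrite lieZr scalerA gen_lie.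
rewrite !sum2 /=.
rewrite !(S0_sv0 (mate_S0 HO _ _ _ _ _ _)) !(S0_sv1 (mate_S0 HO _ _ _ _ _ _)).
rewrite /S0g /= !ffunE !eqxx !m0.
by rewrite !scalerDr !scalerA !addrA.
Qed.

Theorem proposition2p17 (R : realType) (n : nat) (O : opData R) :
  is_cyclic_operad O -> op1 O != 0 -> (0 < n)%N ->
  exists psi : seq (R * Vn R n * Vn R n) -> 'M[R]_(n + n),
    [/\ (forall c, in_sp (psi c)),
        (forall c c', aequiv (S0comb O c) (S0comb O c') <-> psi c = psi c'),
        (forall X, in_sp X -> exists c, psi c = X),
        (forall c c', psi (c ++ c') = psi c + psi c')
          /\ (forall a c, psi (scomb a c) = a *: psi c) &
        (forall c c', exists c'',
            aequiv (abr (S0comb O c) (S0comb O c')) (S0comb O c'')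
            /\ psi c'' = lie (psi c) (psi c'))].
Proof.
move=> HO Hop1 _.
have two0 : (2%:R : R) != 0 by rewrite pnatr_eq0.
exists (@psi R n); split.
- exact: psi_sp.
- move=> c c'; split.
  + move=> H.
    suff HM : Mc c = Mc c' by rewrite /psi HM.
    apply/matrixP => a b.
    have := H _ (PhiF a b) (PhiF_adm a b HO).
    rewrite /evc /S0comb !big_map /S0g /= (cyc_unit_inv HO).
    have sm x : \sum_(p <- x) p.1.1 *: (symm ([ffun j : 'I_2 => if j == ord0 then p.1.2 else p.2] ord0)
          ([ffun j : 'I_2 => if j == ord0 then p.1.2 else p.2] ord_max) a b *: (op1 O + op1 O))
        = Mc x a b *: (op1 O + op1 O).
      rewrite /Mc summxE scaler_suml; apply: eq_bigr => p _.
      by rewrite !ffunE eqxx m0 scalerA [(_ *: symm _ _) a b]mxE.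
    rewrite !sm => /eqP; rewrite -subr_eq0 -scalerBl scaler_eq0 => /orP [|].
      by rewrite subr_eq0 => /eqP.
    by rewrite -mulr2n -scaler_nat scaler_eq0 (negbTE two0) (negbTE Hop1).
  + move=> H W Phi Had.
    have e x : Mc x = - (psi x *m Jmx R n).
      by rewrite /psi -mulmxA JJ mulmxN mulmx1 opprK.
    have HM : Mc c = Mc c' by rewrite e H -e.
    by apply: (scalerI two0); rewrite !evc2 // HM.
- by move=> X HX; exact: psi_onto.
- by split; [exact: psi_cat | exact: psi_scale].
- by move=> c c'; exists (cbr O c c'); split; [exact: cbr_aequiv | exact: cbr_psi].
Qed.
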